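(* Let $n\ge 1$ and let $G_1,G_2$ be $(n+1)$-partite graphs whose clique complexes $X(G_1),X(G_2)$ are pure $n$-dimensional, $(n+1)$-partite and strongly gallery connected. Then $X(G_1\circledast G_2)$ is also a pure $n$-dimensional, $(n+1)$-partite, strongly gallery connected clique complex.
   Context: An $(n+1)$-partite graph is a graph $G=(V,E)$ with an ordered tuple $(V^0,\ldots,V^n)$ of pairwise disjoint independent sets with union $V$. For $(n+1)$-partite graphs $G_1=((V_1^0,\ldots,V_1^n),E_1)$, $G_2=((V_2^0,\ldots,V_2^n),E_2)$, the partite product $G_1\circledast G_2$ has ordered parts $(V_1^0\times V_2^0,\ldots,V_1^n\times V_2^n)$, and for $i\ne j$, $(a,b)\in V_1^i\times V_2^i$ and $(c,d)\in V_1^j\times V_2^j$ are adjacent iff $\{a,c\}\in E_1$ and $\{b,d\}\in E_2$ (no edges inside a part). The clique complex $X(G)$ is the simplicial complex of cliques of $G$; it is $n$-dimensional if the largest clique has $n+1$ vertices, and pure if every clique is contained in a clique of size $n+1$. The link of a clique $C$ is the clique complex of the subgraph induced on the set of vertices adjacent to all vertices of $C$. $X$ is strongly gallery connected if its 1-skeleton (the graph $G$) is connected and the 1-skeleton of every link of dimension $\ge 1$ is connected. *)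

(* Defs.v *)
From mathcomp Require Import all_boot.
Set Implicit Arguments. Unset Strict Implicit. Unset Printing Implicit Defensive.

(* An (n+1)-partite graph: a finite vertex type T, a colouring
   [part : T -> 'I_n.+1] (the i-th part is the fibre over i; the parts are
   thus pairwise disjoint with union T), and an adjacency relation [adj]. *)
Definition partite_graph (n : nat) (T : finType) (part : T -> 'I_n.+1)
  (adj : rel T) : Prop :=
  [/\ symmetric adj, irreflexive adj &
      forall x y, adj x y -> part x != part y].

(* Cliques of the graph = faces of the clique complex X(G)
   (the empty set is the empty face). *)
Definition is_clique (T : finType) (adj : rel T) (A : {set T}) : bool :=
  [forall x in A, forall y in A, (x != y) ==> adj x y].

Definition pure_ndim (n : nat) (T : finType) (adj : rel T) : Prop :=
  [/\ exists A : {set T}, is_clique adj A /\ #|A| = n.+1,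
      forall A : {set T}, is_clique adj A -> #|A| <= n.+1 &
      forall A : {set T}, is_clique adj A ->
        exists B : {set T}, [/\ A \subset B, is_clique adj B & #|B| = n.+1]].

Definition partite_complex (n : nat) (T : finType) (part : T -> 'I_n.+1)
  (adj : rel T) : Prop :=
  forall A : {set T}, is_clique adj A -> {in A &, injective part}.

Definition connected_on (T : finType) (adj : rel T) (S : {set T}) : Prop :=
  forall x y, x \in S -> y \in S ->
    connect [rel u v | [&& u \in S, v \in S & adj u v]] x y.

Definition link_set (T : finType) (adj : rel T) (C : {set T}) : {set T} :=
  [set v | [forall c in C, adj v c]].

(* The link of C (clique complex of the subgraph induced on link_set C)
   has dimension >= 1: it contains a clique with at least 2 vertices. *)
Definition link_dim_ge1 (T : finType) (adj : rel T) (C : {set T}) : Prop :=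
  exists B : {set T},
    [/\ B \subset link_set adj C, is_clique adj B & 1 < #|B|].

Definition strongly_gallery_connected (T : finType) (adj : rel T) : Prop :=
  connected_on adj [set: T] /\
  forall C : {set T}, is_clique adj C -> link_dim_ge1 adj C ->
    connected_on adj (link_set adj C).

Definition pprod_vert (n : nat) (T1 T2 : finType)
  (part1 : T1 -> 'I_n.+1) (part2 : T2 -> 'I_n.+1) : finType :=
  {p : T1 * T2 | part1 p.1 == part2 p.2}.

Definition pprod_part (n : nat) (T1 T2 : finType)
  (part1 : T1 -> 'I_n.+1) (part2 : T2 -> 'I_n.+1)
  (p : pprod_vert part1 part2) : 'I_n.+1 :=
  part1 (val p).1.

Definition pprod_adj (n : nat) (T1 T2 : finType)
  (part1 : T1 -> 'I_n.+1) (adj1 : rel T1)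
  (part2 : T2 -> 'I_n.+1) (adj2 : rel T2) : rel (pprod_vert part1 part2) :=
  fun p q => [&& part1 (val p).1 != part1 (val q).1,
                 adj1 (val p).1 (val q).1 & adj2 (val p).2 (val q).2].

Arguments pprod_vert {n T1 T2} part1 part2.
Arguments pprod_part {n T1 T2} part1 part2 p.
Arguments pprod_adj {n T1 T2} part1 adj1 part2 adj2 p q.

(* Main.v *)
Require Import Defs.
From mathcomp Require Import all_boot zify.
Set Implicit Arguments. Unset Strict Implicit. Unset Printing Implicit Defensive.

Lemma cliqueP (T : finType) (adj : rel T) (A : {set T}) :
  reflect (forall x y, x \in A -> y \in A -> x != y -> adj x y) (is_clique adj A).
Proof.
apply: (iffP forall_inP) => H.
  move=> x y hx hy; move/forall_inP: (H x hx) => /(_ y hy) /implyP; exact.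
move=> x hx; apply/forall_inP => y hy; apply/implyP; exact: H.
Qed.

Lemma clique_sub (T : finType) (adj : rel T) (A B : {set T}) :
  is_clique adj B -> A \subset B -> is_clique adj A.
Proof.
move=> /cliqueP hB hAB; apply/cliqueP => x y hx hy; apply: hB; exact: (subsetP hAB).
Qed.

Lemma linkP (T : finType) (adj : rel T) (C : {set T}) v :
  reflect (forall c, c \in C -> adj v c) (v \in link_set adj C).
Proof. rewrite inE; exact: forall_inP. Qed.

Lemma link_notin (T : finType) (adj : rel T) (C : {set T}) v :
  irreflexive adj -> v \in link_set adj C -> v \notin C.
Proof. move=> irr /linkP h; apply/negP => /h; by rewrite irr. Qed.

Lemma clique_add (T : finType) (adj : rel T) (C : {set T}) v :
  symmetric adj -> is_clique adj C -> v \in link_set adj C -> is_clique adj (v |: C).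
Proof.
move=> sym /cliqueP hC /linkP hv; apply/cliqueP => x y.
rewrite !in_setU1 => /predU1P[->|hx] /predU1P[->|hy]; rewrite ?eqxx //.
- by move=> _; apply: hv.
- by move=> _; rewrite sym; apply: hv.
- exact: hC.
Qed.

Lemma exD (T : finType) (A B : {set T}) : #|A| < #|B| -> exists x, x \in B :\: A.
Proof.
case: (set_0Vmem (B :\: A)) => [/eqP|[x hx]]; last by exists x.
rewrite setD_eq0 => /subset_leq_card; lia.
Qed.

Definition facet n (T : finType) (adj : rel T) (F : {set T}) :=
  is_clique adj F && (#|F| == n.+1).

Lemma connect_ind' (T : finType) (e : rel T) (P : T -> Prop) x :
  P x -> (forall y z, connect e x y -> P y -> e y z -> P z) ->
  forall z, connect e x z -> P z.
Proof.
move=> h0 hs z /connectP [p hp ->]; elim/last_ind: p hp => [|p w IHp] //=.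
rewrite rcons_path => /andP[hp he]; rewrite last_rcons.
apply: (hs (last x p)) => //; last exact: IHp.
by apply/connectP; exists p.
Qed.

Lemma gal n (T : finType) (adj : rel T) (E : {set T} -> {set T} -> Prop) (C0 : {set T}) :
  symmetric adj -> irreflexive adj -> pure_ndim n adj -> strongly_gallery_connected adj ->
  (forall F G H, facet n adj F -> facet n adj G -> facet n adj H ->
     C0 \subset F -> C0 \subset G -> C0 \subset H -> E F G -> E G H -> E F H) ->
  (forall F G, facet n adj F -> facet n adj G -> C0 \subset F -> C0 \subset G ->
     n <= #|F :&: G| -> E F G) ->
  forall C, is_clique adj C -> C0 \subset C -> forall F G, facet n adj F -> facet n adj G ->
    C \subset F -> C \subset G -> E F G.
Proof.
move=> sym irr [_ _ pure] [_ sgc] htr hbase.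
suff H: forall k (C : {set T}), n.+1 - #|C| <= k -> is_clique adj C -> C0 \subset C ->
   forall F G, facet n adj F -> facet n adj G -> C \subset F -> C \subset G -> E F G.
  by move=> C; apply: (H _ C (leqnn (n.+1 - #|C|))).
elim=> [|k IH] C hk hC hC0 F G hF hG hCF hCG.
  apply: hbase => //; [exact: subset_trans hC0 hCF|exact: subset_trans hC0 hCG|].
  have : #|C| <= #|F :&: G| by apply: subset_leq_card; rewrite subsetI hCF hCG.
  lia.
case: (leqP n #|C|) => hc.
  apply: hbase => //; [exact: subset_trans hC0 hCF|exact: subset_trans hC0 hCG|].
  have : #|C| <= #|F :&: G| by apply: subset_leq_card; rewrite subsetI hCF hCG.
  lia.
move: (hF) (hG) => /andP[hFc /eqP hFn] /andP[hGc /eqP hGn].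
have hdim : link_dim_ge1 adj C.
  exists (F :\: C); split.
  - apply/subsetP => x; rewrite in_setD => /andP[hxC hxF]; apply/linkP => c hc'.
    move/cliqueP: hFc; apply => //; first exact: (subsetP hCF).
    by apply: contraNneq hxC => ->.
  - apply: clique_sub hFc _; exact: subsetDl.
  - rewrite cardsDS //; lia.
have hconn := sgc C hC hdim.
have [x hx] : exists x, x \in F :\: C by apply: exD; lia.
have [y hy] : exists y, y \in G :\: C by apply: exD; lia.
have hxl : x \in link_set adj C.
  move: hx; rewrite in_setD => /andP[hxC hxF]; apply/linkP => c hc'.
  move/cliqueP: hFc; apply => //; first exact: (subsetP hCF).
  by apply: contraNneq hxC => ->.
have hyl : y \in link_set adj C.
  move: hy; rewrite in_setD => /andP[hyC hyF]; apply/linkP => c hc'.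
  move/cliqueP: hGc; apply => //; first exact: (subsetP hCG).
  by apply: contraNneq hyC => ->.
have IHz : forall z, z \in link_set adj C -> forall (H K : {set T}), facet n adj H -> facet n adj K ->
    z |: C \subset H -> z |: C \subset K -> E H K.
  move=> z hz H K hH hK hzH hzK; apply: (IH (z |: C)) => //.
  - rewrite cardsU1 (link_notin irr hz) add1n subnS.
    by move: hk; case: (n.+1 - #|C|).
  - exact: clique_add.
  - apply/subsetP => c hc'; rewrite in_setU1 (subsetP hC0 c hc') orbT //.
have hsub : forall z (H : {set T}), z |: C \subset H -> C \subset H.
  move=> z H hzH; apply/subsetP => c hc'; apply: (subsetP hzH); rewrite in_setU1 hc' orbT //.
have hC0F : C0 \subset F by exact: subset_trans hC0 hCF.
suff P : forall z, connect [rel u v | [&& u \in link_set adj C, v \in link_set adj C & adj u v]] x z ->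
    z \in link_set adj C /\ forall H, facet n adj H -> z |: C \subset H -> E F H.
  apply: (proj2 (P y (hconn x y hxl hyl))) => //.
  by rewrite subUset sub1set hCG andbT; move: hy; rewrite in_setD => /andP[].
apply: connect_ind'.
  split => // H hH hxH; apply: (IHz x) => //.
  by rewrite subUset sub1set hCF andbT; move: hx; rewrite in_setD => /andP[].
move=> u w _ [hul hu] /= /and3P[_ hwl huw]; split => // H hH hwH.
have hcl : is_clique adj (w |: (u |: C)).
  apply: clique_add => //; first exact: clique_add.
  apply/linkP => c; rewrite in_setU1 => /predU1P[->|hc']; first by rewrite sym.
  by move/linkP: hwl; apply.
have [K [hKs hKc hKn]] := pure _ hcl.
have hK : facet n adj K by rewrite /facet hKc hKn eqxx.
have huK : u |: C \subset K.
  apply/subsetP => c hc'; apply: (subsetP hKs); rewrite in_setU1 hc' orbT //.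
have hwK : w |: C \subset K.
  apply/subsetP => c; rewrite in_setU1 => /predU1P[->|hc']; apply: (subsetP hKs).
    by rewrite setU11.
  by rewrite !in_setU1 hc' !orbT.
apply: (htr F K H) => //.
- exact: subset_trans hC0 (hsub _ _ huK).
- exact: subset_trans hC0 (hsub _ _ hwH).
- exact: hu.
- exact: (IHz w).
Qed.

Lemma facet_colors n (T : finType) (part : T -> 'I_n.+1) (adj : rel T) (B : {set T}) :
  partite_complex part adj -> is_clique adj B -> #|B| = n.+1 ->
  forall i, exists2 x, x \in B & part x = i.
Proof.
move=> pc hB hBn i.
have hc : #|part @: B| = n.+1 by rewrite card_in_imset //; exact: pc.
have hT : part @: B = setT.
  apply/eqP; rewrite eqEcard subsetT /=. rewrite cardsT card_ord hc. done.
have : i \in part @: B by rewrite hT inE.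
by case/imsetP => x hx ->; exists x.
Qed.

Lemma pval_inj n (T1 T2 : finType) (part1 : T1 -> 'I_n.+1) (part2 : T2 -> 'I_n.+1)
  (r s : pprod_vert part1 part2) : sval r = sval s -> r = s.
Proof.
case: r s => [a ha] [b hb] /= e; subst b; congr exist; exact: bool_irrelevance.
Qed.

Lemma plink n (T1 : finType) (part1 : T1 -> 'I_n.+1) (adj1 : rel T1)
  (T2 : finType) (part2 : T2 -> 'I_n.+1) (adj2 : rel T2) :
  partite_graph part1 adj1 -> partite_graph part2 adj2 ->
  pure_ndim n adj1 -> partite_complex part1 adj1 -> strongly_gallery_connected adj1 ->
  pure_ndim n adj2 -> partite_complex part2 adj2 -> strongly_gallery_connected adj2 ->
  forall C : {set pprod_vert part1 part2},
  is_clique (pprod_adj part1 adj1 part2 adj2) C -> #|C| < n ->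
  connected_on (pprod_adj part1 adj1 part2 adj2) (link_set (pprod_adj part1 adj1 part2 adj2) C).
Proof.
move=> [sym1 irr1 col1] [sym2 irr2 col2] pure1 pc1 sgc1 pure2 pc2 sgc2 C hC hCn.
set padj := pprod_adj part1 adj1 part2 adj2.
pose C1 := [set (val c).1 | c in C].
pose C2 := [set (val c).2 | c in C].
have hvc : forall c : pprod_vert part1 part2, part1 (val c).1 = part2 (val c).2.
  by move=> c; apply/eqP; exact: (valP c).
have hC1 : is_clique adj1 C1.
  apply/cliqueP => x y /imsetP[c hc ->] /imsetP[d hd ->] hne.
  have hcd : c != d by apply: contraNneq hne => ->.
  by move/cliqueP: hC => /(_ c d hc hd hcd) /and3P[].
have hC2 : is_clique adj2 C2.
  apply/cliqueP => x y /imsetP[c hc ->] /imsetP[d hd ->] hne.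
  have hcd : c != d by apply: contraNneq hne => ->.
  by move/cliqueP: hC => /(_ c d hc hd hcd) /and3P[].
have hC1n : #|C1| < n := leq_ltn_trans (leq_imset_card _ _) hCn.
have hC2n : #|C2| < n := leq_ltn_trans (leq_imset_card _ _) hCn.
have key1 : forall (F1 : {set T1}) x, is_clique adj1 F1 -> C1 \subset F1 -> x \in F1 ->
    forall y, y \in C2 -> part1 x = part2 y -> x \in C1.
  move=> F1 x hF hCF hx y /imsetP[c hc ->] hp.
  have -> : x = (val c).1.
    apply: (pc1 F1 hF) => //; first by apply: (subsetP hCF); apply/imsetP; exists c.
    by rewrite hp hvc.
  by apply/imsetP; exists c.
have key2 : forall (F2 : {set T2}) y, is_clique adj2 F2 -> C2 \subset F2 -> y \in F2 ->
    forall x, x \in C1 -> part1 x = part2 y -> y \in C2.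
  move=> F2 y hF hCF hy x /imsetP[c hc ->] hp.
  have -> : y = (val c).2.
    apply: (pc2 F2 hF) => //; first by apply: (subsetP hCF); apply/imsetP; exists c.
    by rewrite -hp hvc.
  by apply/imsetP; exists c.
pose P (F1 : {set T1}) (F2 : {set T2}) :=
  [set r : pprod_vert part1 part2 | ((val r).1 \in F1 :\: C1) && ((val r).2 \in F2 :\: C2)].
have hPlink : forall F1 F2, is_clique adj1 F1 -> C1 \subset F1 -> is_clique adj2 F2 -> C2 \subset F2 ->
    forall r, r \in P F1 F2 -> r \in link_set padj C.
  move=> F1 F2 hF1 hCF1 hF2 hCF2 r; rewrite inE !in_setD => /andP[/andP[h1C h1F] /andP[h2C h2F]].
  apply/linkP => c hc.
  have hc1 : (val c).1 \in C1 by apply/imsetP; exists c.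
  have hc2 : (val c).2 \in C2 by apply/imsetP; exists c.
  have a1 : adj1 (val r).1 (val c).1.
    move/cliqueP: hF1; apply => //; first exact: (subsetP hCF1).
    by apply: contraNneq h1C => ->.
  have a2 : adj2 (val r).2 (val c).2.
    move/cliqueP: hF2; apply => //; first exact: (subsetP hCF2).
    by apply: contraNneq h2C => ->.
  by rewrite /padj /pprod_adj a1 a2 (col1 _ _ a1).
have hPconn : forall F1 F2, is_clique adj1 F1 -> C1 \subset F1 -> is_clique adj2 F2 -> C2 \subset F2 ->
    forall r s, r \in P F1 F2 -> s \in P F1 F2 ->
    connect [rel u v | [&& u \in link_set padj C, v \in link_set padj C & padj u v]] r s.
  move=> F1 F2 hF1 hCF1 hF2 hCF2 r s hr hs.
  case: (eqVneq r s) => [->|hne]; first exact: connect0.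
  apply: connect1; rewrite /= (hPlink F1 F2) // (hPlink F1 F2) //=.
  move: hr hs; rewrite !inE => /andP[/andP[_ r1F] /andP[_ r2F]] /andP[/andP[_ s1F] /andP[_ s2F]].
  have h1 : (val r).1 != (val s).1.
    apply: contraNneq hne => h1; apply/eqP; apply: pval_inj.
    have h2 : (val r).2 = (val s).2.
      by apply: (pc2 F2 hF2) => //; rewrite -!hvc h1.
    by rewrite [val r]surjective_pairing [val s]surjective_pairing h1 h2.
  have a1 : adj1 (val r).1 (val s).1 by move/cliqueP: hF1; apply.
  have c1 := col1 _ _ a1.
  have h2 : (val r).2 != (val s).2.
    by apply: contraNneq c1 => h2; rewrite !hvc h2.
  have a2 : adj2 (val r).2 (val s).2 by move/cliqueP: hF2; apply.
  by rewrite /padj /pprod_adj a1 a2 c1.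
have Pex1 : forall F1 F2, is_clique adj1 F1 -> C1 \subset F1 -> is_clique adj2 F2 -> #|F2| = n.+1 ->
    C2 \subset F2 -> forall x, x \in F1 :\: C1 -> exists2 m, m \in P F1 F2 & (val m).1 = x.
  move=> F1 F2 hF1 hCF1 hF2 hF2n hCF2 x hx.
  have [y hy hyc] := facet_colors pc2 hF2 hF2n (part1 x).
  have hxy : part1 x == part2 y by rewrite hyc.
  exists (Sub (x, y) hxy) => //.
  rewrite inE hx /= in_setD hy andbT.
  apply/negP => hyC2; move: hx; rewrite in_setD => /andP[/negP hxC hxF]; apply: hxC.
  exact: (key1 F1 x hF1 hCF1 hxF y hyC2 (esym hyc)).
have Pex2 : forall F1 F2, is_clique adj1 F1 -> #|F1| = n.+1 -> C1 \subset F1 -> is_clique adj2 F2 ->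
    C2 \subset F2 -> forall y, y \in F2 :\: C2 -> exists2 m, m \in P F1 F2 & (val m).2 = y.
  move=> F1 F2 hF1 hF1n hCF1 hF2 hCF2 y hy.
  have [x hx hxc] := facet_colors pc1 hF1 hF1n (part2 y).
  have hxy : part1 x == part2 y by rewrite hxc.
  exists (Sub (x, y) hxy) => //.
  rewrite inE hy andbT in_setD hx andbT.
  apply/negP => hxC1; move: hy; rewrite in_setD => /andP[/negP hyC hyF]; apply: hyC.
  exact: (key2 F2 y hF2 hCF2 hyF x hxC1 hxc).
move=> p q hp hq.
have hp1 : (val p).1 \in link_set adj1 C1.
  apply/linkP => _ /imsetP[c hc ->]; move/linkP: hp => /(_ c hc) /and3P[_ h _]; exact h.
have hp2 : (val p).2 \in link_set adj2 C2.
  apply/linkP => _ /imsetP[c hc ->]; move/linkP: hp => /(_ c hc) /and3P[_ _ h]; exact h.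
have hq1 : (val q).1 \in link_set adj1 C1.
  apply/linkP => _ /imsetP[c hc ->]; move/linkP: hq => /(_ c hc) /and3P[_ h _]; exact h.
have hq2 : (val q).2 \in link_set adj2 C2.
  apply/linkP => _ /imsetP[c hc ->]; move/linkP: hq => /(_ c hc) /and3P[_ _ h]; exact h.
have [_ _ ext1] := pure1.
have [_ _ ext2] := pure2.
have [F1 [hF1s hF1c hF1n]] := ext1 _ (clique_add sym1 hC1 hp1).
have [F2 [hF2s hF2c hF2n]] := ext2 _ (clique_add sym2 hC2 hp2).
have [Q1 [hQ1s hQ1c hQ1n]] := ext1 _ (clique_add sym1 hC1 hq1).
have [Q2 [hQ2s hQ2c hQ2n]] := ext2 _ (clique_add sym2 hC2 hq2).
have subU : forall (T : finType) (a : T) (A B : {set T}), a |: A \subset B -> A \subset B /\ a \in B.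
  move=> T a A B h; split; last by apply: (subsetP h); rewrite setU11.
  by apply/subsetP => z hz; apply: (subsetP h); rewrite in_setU1 hz orbT.
have [hCF1 hpF1] := subU _ _ _ _ hF1s.
have [hCF2 hpF2] := subU _ _ _ _ hF2s.
have [hCQ1 hqQ1] := subU _ _ _ _ hQ1s.
have [hCQ2 hqQ2] := subU _ _ _ _ hQ2s.
have hpP : p \in P F1 F2.
  by rewrite inE !in_setD hpF1 hpF2 (link_notin irr1 hp1) (link_notin irr2 hp2).
have hqP : q \in P Q1 Q2.
  by rewrite inE !in_setD hqQ1 hqQ2 (link_notin irr1 hq1) (link_notin irr2 hq2).
have hqQ1' : (val q).1 \in Q1 :\: C1 by rewrite in_setD hqQ1 (link_notin irr1 hq1).
have [m hm _] := Pex1 Q1 F2 hQ1c hCQ1 hF2c hF2n hCF2 _ hqQ1'.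
pose lr := [rel u v | [&& u \in link_set padj C, v \in link_set padj C & padj u v]].
have st1 : forall G H, facet n adj1 G -> facet n adj1 H -> C1 \subset G -> C1 \subset H ->
    forall r s, r \in P G F2 -> s \in P H F2 -> connect lr r s.
  move=> G H hG hH hCG hCH.
  refine (gal (E := fun G H => forall r s, r \in P G F2 -> s \in P H F2 -> connect lr r s)
    (C0 := C1) sym1 irr1 pure1 sgc1 _ _ hC1 (subxx _) hG hH hCG hCH).
    move=> F G' H' hF hG' hH' _ hCG' _ e1 e2 r s hr hs.
    move: hG' => /andP[hG'c /eqP hG'n].
    have [x hx] : exists x, x \in G' :\: C1 by apply: exD; rewrite hG'n; exact: ltnW.
    have [m' hm' _] := Pex1 G' F2 hG'c hCG' hF2c hF2n hCF2 x hx.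
    exact: connect_trans (e1 r m' hr hm') (e2 m' s hm' hs).
  move=> F G' hF hG' hCF hCG' hn r s hr hs.
  move: hF hG' => /andP[hFc /eqP hFn] /andP[hG'c /eqP hG'n].
  have [x hx] : exists x, x \in (F :&: G') :\: C1 by apply: exD; exact: leq_trans hC1n hn.
  move: (hx); rewrite !inE => /andP[hxC /andP[hxF hxG]].
  have hxF' : x \in F :\: C1 by rewrite in_setD hxC hxF.
  have [m' hm' hm'1] := Pex1 F F2 hFc hCF hF2c hF2n hCF2 x hxF'.
  have hm'G : m' \in P G' F2.
    by move: hm'; rewrite !inE hm'1 hxC hxF hxG.
  apply: connect_trans (hPconn F F2 hFc hCF hF2c hCF2 r m' hr hm') _.
  exact: (hPconn G' F2 hG'c hCG' hF2c hCF2 m' s hm'G hs).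
have st2 : forall G H, facet n adj2 G -> facet n adj2 H -> C2 \subset G -> C2 \subset H ->
    forall r s, r \in P Q1 G -> s \in P Q1 H -> connect lr r s.
  move=> G H hG hH hCG hCH.
  refine (gal (E := fun G H => forall r s, r \in P Q1 G -> s \in P Q1 H -> connect lr r s)
    (C0 := C2) sym2 irr2 pure2 sgc2 _ _ hC2 (subxx _) hG hH hCG hCH).
    move=> F G' H' hF hG' hH' _ hCG' _ e1 e2 r s hr hs.
    move: hG' => /andP[hG'c /eqP hG'n].
    have [x hx] : exists x, x \in G' :\: C2 by apply: exD; rewrite hG'n; exact: ltnW.
    have [m' hm' _] := Pex2 Q1 G' hQ1c hQ1n hCQ1 hG'c hCG' x hx.
    exact: connect_trans (e1 r m' hr hm') (e2 m' s hm' hs).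
  move=> F G' hF hG' hCF hCG' hn r s hr hs.
  move: hF hG' => /andP[hFc /eqP hFn] /andP[hG'c /eqP hG'n].
  have [x hx] : exists x, x \in (F :&: G') :\: C2 by apply: exD; exact: leq_trans hC2n hn.
  move: (hx); rewrite !inE => /andP[hxC /andP[hxF hxG]].
  have hxF' : x \in F :\: C2 by rewrite in_setD hxC hxF.
  have [m' hm' hm'2] := Pex2 Q1 F hQ1c hQ1n hCQ1 hFc hCF x hxF'.
  have hm'G : m' \in P Q1 G'.
    by move: hm'; rewrite !inE hm'2 hxC hxF hxG !andbT.
  apply: connect_trans (hPconn Q1 F hQ1c hCQ1 hFc hCF r m' hr hm') _.
  exact: (hPconn Q1 G' hQ1c hCQ1 hG'c hCG' m' s hm'G hs).
have fF1 : facet n adj1 F1 by rewrite /facet hF1c hF1n eqxx.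
have fQ1 : facet n adj1 Q1 by rewrite /facet hQ1c hQ1n eqxx.
have fF2 : facet n adj2 F2 by rewrite /facet hF2c hF2n eqxx.
have fQ2 : facet n adj2 Q2 by rewrite /facet hQ2c hQ2n eqxx.
apply: connect_trans (st1 F1 Q1 fF1 fQ1 hCF1 hCQ1 p m hpP hm) _.
exact: (st2 F2 Q2 fF2 fQ2 hCF2 hCQ2 m q hm hqP).
Qed.

Unset Implicit Arguments.

Theorem claim2p1 (n : nat) (hn : 1 <= n)
  (T1 : finType) (part1 : T1 -> 'I_n.+1) (adj1 : rel T1)
  (T2 : finType) (part2 : T2 -> 'I_n.+1) (adj2 : rel T2) :
  partite_graph part1 adj1 -> partite_graph part2 adj2 ->
  pure_ndim n adj1 -> partite_complex part1 adj1 ->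
  strongly_gallery_connected adj1 ->
  pure_ndim n adj2 -> partite_complex part2 adj2 ->
  strongly_gallery_connected adj2 ->
  [/\ partite_graph (pprod_part part1 part2) (pprod_adj part1 adj1 part2 adj2),
      pure_ndim n (pprod_adj part1 adj1 part2 adj2),
      partite_complex (pprod_part part1 part2) (pprod_adj part1 adj1 part2 adj2) &
      strongly_gallery_connected (pprod_adj part1 adj1 part2 adj2)].
Proof.
move=> pg1 pg2 pure1 pc1 sgc1 pure2 pc2 sgc2.
move: (pg1) (pg2) => [sym1 irr1 col1] [sym2 irr2 col2].
set padj := pprod_adj part1 adj1 part2 adj2.
have hvc : forall c : pprod_vert part1 part2, part1 (val c).1 = part2 (val c).2.
  by move=> c; apply/eqP; exact: (valP c).
have pgP : partite_graph (pprod_part part1 part2) padj.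
  split.
  - by move=> p q; rewrite /padj /pprod_adj eq_sym sym1 sym2.
  - by move=> p; rewrite /padj /pprod_adj eqxx.
  - by move=> p q /and3P[].
have [psym pirr _] := pgP.
have pcP : partite_complex (pprod_part part1 part2) padj.
  move=> A /cliqueP hA p q hp hq hpq; apply/eqP; apply/negPn/negP => hne.
  move: (hA p q hp hq hne); rewrite /padj /pprod_adj.
  by move: hpq; rewrite /pprod_part => ->; rewrite eqxx.
have bound : forall A : {set pprod_vert part1 part2}, is_clique padj A -> #|A| <= n.+1.
  move=> A hA; rewrite -(card_in_imset (pcP A hA)).
  by apply: leq_trans (max_card _) _; rewrite card_ord.
have [_ _ ext1] := pure1.
have [_ _ ext2] := pure2.
have ext : forall A : {set pprod_vert part1 part2}, is_clique padj A ->
    exists B : {set pprod_vert part1 part2}, [/\ A \subset B, is_clique padj B & #|B| = n.+1].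
  move=> A hA.
  pose A1 := [set (val c).1 | c in A].
  pose A2 := [set (val c).2 | c in A].
  have hA1 : is_clique adj1 A1.
    apply/cliqueP => x y /imsetP[c hc ->] /imsetP[d hd ->] hne.
    have hcd : c != d by apply: contraNneq hne => ->.
    by move/cliqueP: hA => /(_ c d hc hd hcd) /and3P[].
  have hA2 : is_clique adj2 A2.
    apply/cliqueP => x y /imsetP[c hc ->] /imsetP[d hd ->] hne.
    have hcd : c != d by apply: contraNneq hne => ->.
    by move/cliqueP: hA => /(_ c d hc hd hcd) /and3P[].
  have [B1 [hB1s hB1c hB1n]] := ext1 _ hA1.
  have [B2 [hB2s hB2c hB2n]] := ext2 _ hA2.
  pose B := [set r : pprod_vert part1 part2 | ((val r).1 \in B1) && ((val r).2 \in B2)].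
  have hinj : {in B &, injective (pprod_part part1 part2)}.
    move=> r s; rewrite !inE /pprod_part => /andP[r1 r2] /andP[s1 s2] hp.
    have h1 : (val r).1 = (val s).1 by apply: (pc1 B1 hB1c).
    have h2 : (val r).2 = (val s).2 by apply: (pc2 B2 hB2c) => //; rewrite -!hvc.
    by apply: pval_inj; rewrite [val r]surjective_pairing [val s]surjective_pairing h1 h2.
  exists B; split.
  - apply/subsetP => r hr; rewrite inE; apply/andP; split.
      by apply: (subsetP hB1s); apply/imsetP; exists r.
    by apply: (subsetP hB2s); apply/imsetP; exists r.
  - apply/cliqueP => r s hr hs hne.
    have hp : pprod_part part1 part2 r != pprod_part part1 part2 s.
      by apply: contraNneq hne => e; apply/eqP; apply: hinj.
    move: hr hs hp; rewrite !inE /pprod_part => /andP[r1 r2] /andP[s1 s2] hp.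
    have a1 : adj1 (val r).1 (val s).1.
      by move/cliqueP: hB1c; apply => //; apply: contraNneq hp => ->.
    have a2 : adj2 (val r).2 (val s).2.
      move/cliqueP: hB2c; apply => //; apply: contraNneq hp => e.
      by rewrite !hvc e.
    by rewrite /padj /pprod_adj a1 a2 hp.
  - rewrite -(card_in_imset hinj).
    have -> : pprod_part part1 part2 @: B = setT.
      apply/setP => i; rewrite inE.
      have [x hx hxc] := facet_colors pc1 hB1c hB1n i.
      have [y hy hyc] := facet_colors pc2 hB2c hB2n i.
      have hxy : part1 x == part2 y by rewrite hxc hyc.
      apply/imsetP; exists (Sub (x, y) hxy) => //.
      by rewrite inE /= hx hy.
    by rewrite cardsT card_ord.
have hset0 : is_clique padj set0 by apply/cliqueP => x y; rewrite inE.
split => //.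
- split => //.
  have [B [_ hB hBn]] := ext _ hset0.
  by exists B.
- split.
  + have -> : [set: pprod_vert part1 part2] = link_set padj set0.
      by apply/setP => x; rewrite inE; apply/esym/linkP => c; rewrite inE.
    apply: plink => //; by rewrite cards0.
  + move=> C hC [B [hBs hBc hB2]].
    apply: plink => //.
    have [b1 [b2 [hb1 hb2 hne]]] := card_gt1P hB2.
    have hb1l : b1 \in link_set padj C := subsetP hBs _ hb1.
    have hb2l : b2 \in link_set padj (b1 |: C).
      apply/linkP => c; rewrite in_setU1 => /predU1P[->|hc].
        by move/cliqueP: hBc; apply => //; rewrite eq_sym.
      by move/linkP: (subsetP hBs _ hb2); apply.
    have hcl : is_clique padj (b2 |: (b1 |: C)).
      by apply: clique_add => //; apply: clique_add.
    have := bound _ hcl.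
    rewrite cardsU1 (link_notin pirr hb2l) cardsU1 (link_notin pirr hb1l).
    rewrite /= !add1n !ltnS; exact.
Qed.
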